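(* Let $0<\alpha\le\beta$ with $\alpha\le1$, and let $\gamma:[0,1]\to\mathbb{R}^n$ be an $(\alpha,\beta)$-bi-Hölder curve with constant $1\le C_\gamma<\infty$. Then there exist $C=C(\alpha,\beta,C_\gamma,n)>0$ and $r_0=r_0(\beta,C_\gamma)>0$ such that for all $0<r<r_0$, $$\frac1C\, r^{\frac{\beta-1}{\beta}}\le \widehat\Lambda(B(\widehat\gamma,r),r)\le C\, r^{\frac{\alpha-1}{\alpha}}.$$
   Context: A map $\gamma:[0,1]\to\mathbb{R}^n$ is an $(\alpha,\beta)$-bi-Hölder curve with constant $C_\gamma\ge1$ if $\frac1{C_\gamma}|x-y|^\beta\le|\gamma(x)-\gamma(y)|\le C_\gamma|x-y|^\alpha$ for all $x,y\in[0,1]$. $\widehat\gamma:=\gamma([0,1])$. For $A\subset\mathbb{R}^n$, $B(A,r):=\{x:\mathrm{dist}(x,A)\le r\}$. The length of a curve $\sigma:[0,1]\to\mathbb{R}^n$ is $\ell(\sigma):=\sup\sum_{k=1}^N|\sigma(t_k)-\sigma(t_{k-1})|$, the supremum over all partitions $0=t_0<\dots<t_N=1$. For a compact $E$, $\widehat\Lambda(E,r):=\inf\{\ell(\sigma):\sigma:[0,1]\to\mathbb{R}^n \text{ Lipschitz with } B(\sigma([0,1]),r)\supset E\}$. *)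

(* Defs.v *)
From HB Require Import structures.
From mathcomp Require Import all_boot all_order all_algebra.
From mathcomp Require Import all_classical all_reals all_analysis.
Set Implicit Arguments. Unset Strict Implicit. Unset Printing Implicit Defensive.
Import Order.TTheory GRing.Theory Num.Theory.
Local Open Scope classical_set_scope.
Local Open Scope ring_scope.

Section Defs.
Variable R : realType.
Variable n : nat.

Definition eucl_norm (v : 'rV[R]_n) : R :=
  Num.sqrt (\sum_(i < n) (v ord0 i) ^+ 2).
Definition eucl_dist (x y : 'rV[R]_n) : R := eucl_norm (x - y).

Definition bi_holder (alpha beta Cg : R) (g : R -> 'rV[R]_n) : Prop :=
  forall x y, x \in `[0, 1] -> y \in `[0, 1] ->
    Cg^-1 * (`|x - y| `^ beta) <= eucl_dist (g x) (g y) /\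
    eucl_dist (g x) (g y) <= Cg * (`|x - y| `^ alpha).

Definition curve_image (g : R -> 'rV[R]_n) : set 'rV[R]_n := g @` `[0, 1]%classic.

(* dist(x, A) = inf_{a in A} |x - a|  (extended real; +oo for A empty) *)
Definition dist_set (x : 'rV[R]_n) (A : set 'rV[R]_n) : \bar R :=
  ereal_inf [set (eucl_dist x a)%:E | a in A].

Definition nbhd_closed (A : set 'rV[R]_n) (r : R) : set 'rV[R]_n :=
  [set x | (dist_set x A <= r%:E)%E].

Definition partition_sums (s : R -> 'rV[R]_n) : set (\bar R) :=
  [set v | exists (N : nat) (t : nat -> R),
     [/\ t 0%N = 0, t N = 1, (forall k, (k < N)%N -> t k < t k.+1) &
         v = (\sum_(k < N) eucl_dist (s (t k.+1)) (s (t k)))%:E] ].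

Definition curve_length (s : R -> 'rV[R]_n) : \bar R :=
  ereal_sup (partition_sums s).

Definition lipschitz01 (s : R -> 'rV[R]_n) : Prop :=
  exists L : R, forall x y, x \in `[0, 1] -> y \in `[0, 1] ->
    eucl_dist (s x) (s y) <= L * `|x - y|.

Definition Lambda_hat (E : set 'rV[R]_n) (r : R) : \bar R :=
  ereal_inf [set curve_length s | s in
    [set s : R -> 'rV[R]_n | lipschitz01 s /\
        E `<=` nbhd_closed (s @` `[0, 1]%classic) r]].

End Defs.

(* Main.v *)
Require Import Defs.
From HB Require Import structures.
From mathcomp Require Import all_boot all_order all_algebra.
From mathcomp Require Import all_classical all_reals all_analysis.
From mathcomp Require Import ring lra zify.
Import Order.TTheory GRing.Theory Num.Theory.

Module ME1.
Local Open Scope classical_set_scope.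
Local Open Scope ring_scope.

Section Eucl.
Variable R : realType.
Variable n : nat.
Implicit Types u v w : 'rV[R]_n.

Definition sq v := \sum_(i < n) (v ord0 i) ^+ 2.

Lemma sq_ge0 v : 0 <= sq v.
Proof. by apply: sumr_ge0 => i _; exact: sqr_ge0. Qed.

Lemma CS (a b : 'I_n -> R) :
  (\sum_i a i * b i) ^+ 2 <= (\sum_i a i ^+ 2) * (\sum_i b i ^+ 2).
Proof.
set A := \sum_i a i ^+ 2; set B := \sum_i b i ^+ 2; set C := \sum_i a i * b i.
have B0 : 0 <= B by apply: sumr_ge0 => i _; exact: sqr_ge0.
have [Bz|Bp] := eqVneq B 0.
  have bz : forall i, b i = 0.
    move=> i; apply/eqP; rewrite -sqrf_eq0; apply/eqP.
    by move/psumr_eq0P: Bz => ->// j _; exact: sqr_ge0.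
  rewrite /C big1 ?expr0n ?mulr0n //=; last by move=> i _; rewrite bz mulr0.
  rewrite Bz mulr0 //.
have Bgt : 0 < B by rewrite lt_def Bp B0.
have H : 0 <= \sum_i (B * a i - C * b i) ^+ 2 by apply: sumr_ge0 => i _; exact: sqr_ge0.
have E : \sum_i (B * a i - C * b i) ^+ 2 = B * (A * B - C ^+ 2).
  under eq_bigr => i _ do rewrite sqrrB !exprMn.
  rewrite big_split /= sumrB /= -!mulr_sumr.
  have -> : \sum_i B * a i * (C * b i) *+ 2 = 2 * B * C * C.
    rewrite sumrMnl.
    have -> : \sum_i B * a i * (C * b i) = (B * C) * C.
      rewrite /C mulr_sumr; apply: eq_bigr => i _; ring.
    ring.
  rewrite -/A -/B; ring.
rewrite E in H.
nra.
Qed.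

Lemma sqD u v : sq (u + v) = sq u + 2 * \sum_i u ord0 i * v ord0 i + sq v.
Proof.
rewrite /sq; under eq_bigr => i _ do rewrite mxE sqrrD.
rewrite mulr_sumr -!big_split /=; apply: eq_bigr => i _; ring.
Qed.

Lemma eucl_norm_ge0 v : 0 <= eucl_norm v.
Proof. exact: sqrtr_ge0. Qed.

Lemma eucl_triangle u v : eucl_norm (u + v) <= eucl_norm u + eucl_norm v.
Proof.
rewrite /eucl_norm -/(sq (u+v)) -/(sq u) -/(sq v).
have hu := sq_ge0 u; have hv := sq_ge0 v.
have hC := CS (fun i => u ord0 i) (fun i => v ord0 i).
rewrite -/(sq u) -/(sq v) in hC.
set a := Num.sqrt (sq u); set b := Num.sqrt (sq v).
have a0 : 0 <= a := sqrtr_ge0 _. have b0 : 0 <= b := sqrtr_ge0 _.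
have ea : a ^+ 2 = sq u by rewrite sqr_sqrtr.
have eb : b ^+ 2 = sq v by rewrite sqr_sqrtr.
set C := \sum_i _ in hC.
have hC' : `|C| <= a * b.
  rewrite -(@ler_pXn2r _ 2) ?nnegrE ?mulr_ge0 // real_normK ?num_real // exprMn ea eb //.
have : sq (u + v) <= (a + b) ^+ 2.
  rewrite sqD -/C sqrrD ea eb.
  have := ler_norm C. nra.
move=> h.
have h2 : Num.sqrt (sq (u + v)) <= Num.sqrt ((a + b) ^+ 2) by rewrite ler_sqrt // sqr_ge0.
apply: le_trans h2 _.
by rewrite sqrtr_sqr ger0_norm // addr_ge0.
Qed.


Lemma eucl_dist_ge0 u v : 0 <= eucl_dist u v.
Proof. exact: sqrtr_ge0. Qed.

Lemma eucl_normN v : eucl_norm (- v) = eucl_norm v.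
Proof. by rewrite /eucl_norm; congr Num.sqrt; apply: eq_bigr => i _; rewrite mxE sqrrN. Qed.

Lemma eucl_dist_sym u v : eucl_dist u v = eucl_dist v u.
Proof. by rewrite /eucl_dist -eucl_normN opprB. Qed.

Lemma eucl_dist_tri u v w : eucl_dist u w <= eucl_dist u v + eucl_dist v w.
Proof.
rewrite /eucl_dist; have -> : u - w = (u - v) + (v - w) by rewrite addrA subrK.
exact: eucl_triangle.
Qed.

Lemma eucl_dist0 u : eucl_dist u u = 0.
Proof.
rewrite /eucl_dist /eucl_norm subrr big1 ?sqrtr0 // => i _; rewrite mxE expr0n //.
Qed.

Lemma eucl_normZ (c : R) v : eucl_norm (c *: v) = `|c| * eucl_norm v.
Proof.
rewrite /eucl_norm.
have -> : \sum_(i < n) ((c *: v) ord0 i) ^+ 2 = c ^+ 2 * \sum_(i < n) (v ord0 i) ^+ 2.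
  by rewrite mulr_sumr; apply: eq_bigr => i _; rewrite mxE exprMn.
by rewrite sqrtrM ?sqr_ge0 // sqrtr_sqr.
Qed.

Lemma eucl_norm_sum (m : nat) (F : nat -> 'rV[R]_n) :
  eucl_norm (\sum_(k < m) F k) <= \sum_(k < m) eucl_norm (F k).
Proof.
elim: m => [|m IH]; first by rewrite !big_ord0 /eucl_norm big1 ?sqrtr0 // => i _; rewrite mxE expr0n.
rewrite !big_ord_recr /=; apply: le_trans (eucl_triangle _ _) _.
by rewrite lerD2r.
Qed.

Lemma sq_coord_bound v (m : R) : (forall i, `|v ord0 i| <= m) -> sq v <= n%:R * m ^+ 2.
Proof.
move=> h; rewrite /sq.
have -> : n%:R * m ^+ 2 = \sum_(i < n) m ^+ 2 by rewrite sumr_const card_ord mulr_natl.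
apply: ler_sum => i _; rewrite -real_normK ?num_real //.
by rewrite ler_pXn2r ?nnegrE // (le_trans _ (h i)).
Qed.

Lemma eucl_coord_bound v (m : R) : (forall i, `|v ord0 i| <= m) ->
  eucl_norm v <= Num.sqrt (n%:R * m ^+ 2).
Proof.
move=> h; rewrite /eucl_norm ler_sqrt; last by rewrite mulr_ge0 ?sqr_ge0.
exact: sq_coord_bound.
Qed.

Lemma coord_le_norm v i : `|v ord0 i| <= eucl_norm v.
Proof.
rewrite /eucl_norm -sqrtr_sqr ler_sqrt; last exact: sq_ge0.
rewrite (bigD1 i) //= lerDl; apply: sumr_ge0 => j _; exact: sqr_ge0.
Qed.
End Eucl.
Arguments sq {R n}.
Arguments sq_ge0 {R n}.
Arguments CS {R n}.
Arguments sqD {R n}.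
Arguments eucl_norm_ge0 {R n}.
Arguments eucl_triangle {R n}.
Arguments eucl_dist_ge0 {R n}.
Arguments eucl_normN {R n}.
Arguments eucl_dist_sym {R n}.
Arguments eucl_dist_tri {R n}.
Arguments eucl_dist0 {R n}.
Arguments eucl_normZ {R n}.
Arguments eucl_norm_sum {R n}.
Arguments sq_coord_bound {R n}.
Arguments eucl_coord_bound {R n}.
Arguments coord_le_norm {R n}.

End ME1.
Import ME1.

Module ME2.
Local Open Scope classical_set_scope.
Local Open Scope ring_scope.

Ltac mm := repeat (case: ifPn; [move=> ?|rewrite -ltNge => ?]).

Section PL.
Variable R : realType.

Definition clampc (c x : R) := Num.min (Num.max x 0) c.

Lemma clampc_step (u : R) (m : nat) :
  clampc m%:R u + clampc 1 (u - m%:R) = clampc m.+1%:R u.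
Proof.
rewrite /clampc -natr1 !maxEle.
have hm : (0 : R) <= m%:R by exact: ler0n.
mm; rewrite !minEle; mm; lra.
Qed.


Lemma clampc0 u : clampc 0 u = 0.
Proof. rewrite /clampc maxEle; mm; rewrite minEle; mm; lra. Qed.

Lemma sum_clamp (u : R) (m : nat) :
  \sum_(k < m) clampc 1 (u - k%:R) = clampc m%:R u.
Proof.
elim: m => [|m IH]; first by rewrite big_ord0 clampc0.
by rewrite big_ord_recr /= IH clampc_step.
Qed.

Lemma clamp_mono (c x y : R) : 0 <= c -> x <= y -> clampc c x <= clampc c y.
Proof. move=> c0 xy; rewrite /clampc !maxEle; mm; rewrite !minEle; mm; lra. Qed.

Lemma clamp_lip (c x y : R) : 0 <= c -> x <= y -> clampc c y - clampc c x <= y - x.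
Proof. move=> c0 xy; rewrite /clampc !maxEle; mm; rewrite !minEle; mm; lra. Qed.

Lemma clamp1_ge1 (x : R) : 1 <= x -> clampc 1 x = 1.
Proof. move=> h; rewrite /clampc !maxEle; mm; rewrite !minEle; mm; lra. Qed.

Lemma clamp1_le0 (x : R) : x <= 0 -> clampc 1 x = 0.
Proof. move=> h; rewrite /clampc !maxEle; mm; rewrite !minEle; mm; lra. Qed.

Variable n : nat.

Definition plc (P : nat -> 'rV[R]_n) (m : nat) (t : R) : 'rV[R]_n :=
  P 0%N + \sum_(k < m) clampc 1 (m%:R * t - k%:R) *: (P k.+1 - P k).

Lemma plc_lip (P : nat -> 'rV[R]_n) (m : nat) (D : R) : 0 <= D ->
  (forall k, (k < m)%N -> eucl_dist (P k.+1) (P k) <= D) ->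
  forall x y, eucl_dist (plc P m x) (plc P m y) <= m%:R * D * `|x - y|.
Proof.
move=> D0 HD.
have key : forall x y, x <= y -> eucl_dist (plc P m x) (plc P m y) <= m%:R * D * `|x - y|.
  move=> x y xy.
  rewrite eucl_dist_sym /eucl_dist /plc.
  have -> : P 0%N + \sum_(k < m) clampc 1 (m%:R * y - k%:R) *: (P k.+1 - P k) -
     (P 0%N + \sum_(k < m) clampc 1 (m%:R * x - k%:R) *: (P k.+1 - P k)) =
     \sum_(k < m) (clampc 1 (m%:R * y - k%:R) - clampc 1 (m%:R * x - k%:R)) *: (P k.+1 - P k).
    rewrite opprD addrACA subrr add0r -sumrB; apply: eq_bigr => k _; by rewrite scalerBl.
  apply: le_trans (@eucl_norm_sum _ _ m (fun k : nat => (clampc 1 (m%:R * y - k%:R) - clampc 1 (m%:R * x - k%:R)) *: (P k.+1 - P k))) _.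
  have hm : (0 : R) <= m%:R by exact: ler0n.
  have mxy : m%:R * x <= m%:R * y by rewrite ler_wpM2l.
  apply: (@le_trans _ _ (\sum_(k < m) (clampc 1 (m%:R * y - k%:R) - clampc 1 (m%:R * x - k%:R)) * D)).
    apply: ler_sum => k _; rewrite eucl_normZ ger0_norm; last first.
      by rewrite subr_ge0 clamp_mono // lerD2r.
    apply: ler_wpM2l; first by rewrite subr_ge0 clamp_mono // lerD2r.
    exact: HD.
  rewrite -mulr_suml sumrB !sum_clamp.
  have := clamp_lip _ _ _ hm mxy.
  have -> : `|x - y| = y - x by rewrite distrC ger0_norm // subr_ge0.
  move=> h; nra.
move=> x y; have [xy|yx] := leP x y; first exact: key.
rewrite eucl_dist_sym distrC; apply: key; exact: ltW.
Qed.

Lemma plc_at (P : nat -> 'rV[R]_n) (m j : nat) : (0 < m)%N -> (j <= m)%N ->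
  plc P m (j%:R / m%:R) = P j.
Proof.
move=> m0 jm; rewrite /plc.
have mne : (m%:R : R) != 0 by rewrite pnatr_eq0 -lt0n.
rewrite mulrC divfK //.
rewrite -(big_mkord xpredT (fun k => clampc 1 (j%:R - k%:R) *: (P k.+1 - P k))).
rewrite (@big_cat_nat _ _ _ j 0 m _ _ (leq0n j) jm) /=.
rewrite [X in _ + (_ + X)]big1_seq ?addr0; last first.
  move=> k /andP[_]; rewrite mem_index_iota => /andP[jk _].
  by rewrite clamp1_le0 ?scale0r // subr_le0 ler_nat.
rewrite (@eq_big_seq _ _ _ _ _ _ (fun k => P k.+1 - P k)); last first.
  move=> k; rewrite mem_index_iota => /andP[_ kj].
  rewrite clamp1_ge1 ?scale1r // -natrB ?ler1n ?subn_gt0 //; exact: ltnW.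
by rewrite telescope_sumr // addrC subrK.
Qed.
End PL.
Arguments plc {R n}.
Arguments plc_lip {R n}.
Arguments plc_at {R n}.

End ME2.
Import ME2.

Module ME3.
Local Open Scope ring_scope.

Section Visit.
Variable R : realType.
Variable n : nat.
Variable q : nat -> 'rV[R]_n.
Variable N : nat.
Variable y : 'I_N.+1 -> 'rV[R]_n.
Variable rho : R.
Hypothesis rho0 : 0 < rho.
Hypothesis sep : forall a b, a != b -> 5 * rho <= eucl_dist (y a) (y b).

Definition Wv k := [set j : 'I_N.+1 | [exists i : 'I_k.+1, eucl_dist (q i) (y j) <= rho]].
Definition Vv k := [set j : 'I_N.+1 | eucl_dist (q k) (y j) <= rho].
Definition Sv k := \sum_(i < k) eucl_dist (q i.+1) (q i).

Lemma Vv_card k : (#|Vv k| <= 1)%N.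
Proof.
apply/card_le1P => a; rewrite inE => ha b; rewrite !inE.
apply/idP/eqP => [hb|->//].
apply/eqP; apply: contraT => /sep h2.
have := eucl_dist_tri (y b) (q k) (y a).
rewrite (eucl_dist_sym (y b) (q k)) => h1.
suff : rho <= 0 by rewrite leNgt rho0.
lra.
Qed.

Lemma Wv_mono k : Wv k \subset Wv k.+1.
Proof.
apply/fintype.subsetP => j; rewrite !inE => /existsP[i hi].
by apply/existsP; exists (widen_ord (leqnSn _) i).
Qed.

Lemma Wv_step k : Wv k.+1 \subset Wv k :|: Vv k.+1.
Proof.
apply/fintype.subsetP => j; rewrite !inE => /existsP[i hi].
have [ik|ik] := ltnP i k.+1.
  by apply/orP; left; apply/existsP; exists (Ordinal ik).
have e : nat_of_ord i = k.+1 by apply/eqP; rewrite eqn_leq ik -ltnS ltn_ord.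
by move: hi; rewrite e => ->; rewrite orbT.
Qed.

Lemma Sv_S k : Sv k.+1 = Sv k + eucl_dist (q k.+1) (q k).
Proof. by rewrite /Sv big_ord_recr. Qed.

Lemma Sv_ge0 k : 0 <= Sv k.
Proof. by apply: sumr_ge0 => i _; exact: eucl_dist_ge0. Qed.

Lemma visit_claim k : Wv k != finset.set0 ->
  exists2 j, j \in Wv k &
    3 * rho * ((#|Wv k|)%:R - 1) + eucl_dist (q k) (y j) - rho <= Sv k.
Proof.
elim: k => [|k IH].
  case/set0Pn => j hj; exists j => //.
  have hW : Wv 0 \subset Vv 0.
    apply/fintype.subsetP => a; rewrite !inE => /existsP[i hi].
    by move: hi; rewrite (ord1 i).
  have c1 : (#|Wv 0| <= 1)%N := leq_trans (subset_leq_card hW) (Vv_card 0).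
  have c1' : ((#|Wv 0|)%:R <= 1 :> R) by rewrite (_ : (1:R) = 1%:R) // ler_nat.
  have : j \in Vv 0 by move/fintype.subsetP: hW; apply.
  rewrite inE => hd.
  rewrite /Sv big_ord0. set w := (#|Wv 0|)%:R in c1' *. have hp : 0 <= rho * (1 - w) by rewrite mulr_ge0 ?subr_ge0 // ltW.
  lra.
move=> hne.
have hS := Sv_ge0 k.
have hd := eucl_dist_ge0 (q k.+1) (q k).
have [W0|Wn] := eqVneq (Wv k) finset.set0.
  case/set0Pn: hne => j hj; exists j => //.
  have hW : Wv k.+1 \subset Vv k.+1.
    by apply: fintype.subset_trans (Wv_step k) _; rewrite W0 finset.set0U.
  have c1 : (#|Wv k.+1| <= 1)%N := leq_trans (subset_leq_card hW) (Vv_card _).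
  have c1' : ((#|Wv k.+1|)%:R <= 1 :> R) by rewrite (_ : (1:R) = 1%:R) // ler_nat.
  have : j \in Vv k.+1 by move/fintype.subsetP: hW; apply.
  rewrite inE Sv_S => hd'.
  set w := (#|Wv k.+1|)%:R in c1' *.
  have hp : 0 <= rho * (1 - w) by rewrite mulr_ge0 ?subr_ge0 // ltW.
  lra.
have [j0 hj0 hIH] := IH Wn.
have [sub|nsub] := boolP (Vv k.+1 \subset Wv k).
  exists j0; first by move/fintype.subsetP: (Wv_mono k); apply.
  have hW : Wv k.+1 \subset Wv k.
    by apply: fintype.subset_trans (Wv_step k) _; rewrite finset.subUset fintype.subxx sub.
  have c1 : ((#|Wv k.+1|)%:R <= (#|Wv k|)%:R :> R) by rewrite ler_nat subset_leq_card.
  have tri := eucl_dist_tri (q k.+1) (q k) (y j0).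
  rewrite Sv_S.
  set w := (#|Wv k.+1|)%:R in c1 *. set w0 := (#|Wv k|)%:R in c1 hIH *.
  have hp : 0 <= rho * (w0 - w) by rewrite mulr_ge0 ?subr_ge0 // ltW.
  lra.
case/fintype.subsetPn: nsub => js hjs hjsW.
exists js; first by rewrite inE; apply/existsP; exists ord_max; move: hjs; rewrite inE.
have c1 : (#|Wv k.+1| <= #|Wv k| + 1)%N.
  apply: leq_trans (subset_leq_card (Wv_step k)) _.
  apply: leq_trans (leq_card_setU _ _) _.
  by rewrite leq_add2l Vv_card.
have c1' : ((#|Wv k.+1|)%:R <= (#|Wv k|)%:R + 1 :> R) by rewrite (_ : (1:R) = 1%:R) // -natrD ler_nat.
have neq : j0 != js by apply/negP => /eqP E; move: hjsW; rewrite -E hj0.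
have hsep := sep _ _ neq.
move: hjs; rewrite inE => hjs.
have tri1 := eucl_dist_tri (y j0) (q k.+1) (y js).
have tri2 := eucl_dist_tri (q k.+1) (q k) (y j0).
rewrite (eucl_dist_sym (y j0) (q k.+1)) in tri1.
rewrite Sv_S.
set w := (#|Wv k.+1|)%:R in c1' *. set w0 := (#|Wv k|)%:R in c1' hIH *.
have hp : 0 <= rho * (w0 + 1 - w) by rewrite mulr_ge0 ?subr_ge0 // ltW.
lra.
Qed.

Lemma visit_sum (K : nat) :
  (forall j, exists i, (i <= K)%N /\ eucl_dist (q i) (y j) <= rho) ->
  3 * rho * N%:R - rho <= \sum_(i < K) eucl_dist (q i.+1) (q i).
Proof.
move=> hv.
have WT : Wv K = [set: 'I_N.+1].
  apply/setP => j; rewrite !inE; have [i [iK hi]] := hv j.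
  by apply/existsP; exists (Ordinal (iK : (i < K.+1)%N)).
have hne : Wv K != finset.set0 by rewrite WT; apply/set0Pn; exists ord0; rewrite inE.
have [j _ h] := visit_claim K hne.
rewrite WT cardsT card_ord in h.
have := eucl_dist_ge0 (q K) (y j).
rewrite -/(Sv K). move: h. rewrite -natr1 => h. lra.
Qed.

End Visit.

End ME3.
Import ME3.

Module ME4.
Local Open Scope ring_scope.

Section Round.
Variable R : realType.

Lemma round1 (d u : R) (K : nat) : 0 < d -> `|u| <= K%:R * d ->
  (Num.truncn (u / d + K%:R + 2^-1) < (K + K).+1)%N /\
  `|u - d * ((Num.truncn (u / d + K%:R + 2^-1))%:R - K%:R)| <= d / 2.
Proof.
move=> d0 hu.
set v := u / d + K%:R + 2^-1.
have ev : v = u / d + K%:R + 2^-1 by [].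
have hud : `|u / d| <= K%:R by rewrite normrM (gtr0_norm (_ : 0 < d^-1)) ?invr_gt0 //  ler_pdivrMr.
have v0 : 0 <= v by move: hud; rewrite ler_norml /v => /andP[h1 h2]; lra.
have [h1 h2] := andP (Num.Theory.truncn_itv v0).
set t := Num.truncn v in h1 h2.
split.
  rewrite -(ltr_nat R) -natr1 natrD.
  move: hud; rewrite ler_norml => /andP[h3 h4]. lra.
have e : u - d * (t%:R - K%:R) = d * (v - 2^-1 - t%:R).
  rewrite /v; field; exact: lt0r_neq0.
rewrite e normrM (gtr0_norm d0).
apply: ler_wpM2l; first exact: ltW.
rewrite -natr1 in h2. rewrite ler_norml; apply/andP; split; lra.
Qed.

Lemma grid1 (t : R) (M : nat) : (0 < M)%N -> 0 <= t <= 1 ->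
  exists j : nat, (j <= M)%N /\ `|t - j%:R / M%:R| <= M%:R^-1.
Proof.
move=> M0 /andP[t0 t1].
have Mp : (0 : R) < M%:R by rewrite ltr0n.
have v0 : 0 <= t * M%:R by rewrite mulr_ge0 // ler0n.
have [h1 h2] := andP (Num.Theory.truncn_itv v0).
set j := Num.truncn (t * M%:R) in h1 h2.
exists j; split.
  rewrite -(ler_nat R); apply: le_trans h1 _; rewrite ler_piMl //. 
have e : t - j%:R / M%:R = (t * M%:R - j%:R) / M%:R by field; exact: lt0r_neq0.
rewrite e normrM (gtr0_norm (_ : 0 < M%:R^-1)) ?invr_gt0 // -[X in _ <= X]mul1r ler_pM2r ?invr_gt0 //.
rewrite -natr1 in h2. rewrite ger0_norm; lra.
Qed.

End Round.
Arguments round1 {R}.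
Arguments grid1 {R}.

End ME4.
Import ME4.

Module ME5.
Local Open Scope classical_set_scope.
Local Open Scope ring_scope.

Section Gen.
Variable R : realType.
Variable n : nat.

Lemma in_nbhd (A : set 'rV[R]_n) (r : R) x a : A a -> eucl_dist x a <= r ->
  nbhd_closed A r x.
Proof.
move=> Aa h; rewrite /nbhd_closed /=.
apply: ge_ereal_inf; exists (eucl_dist x a)%:E; first by exists a.
by rewrite lee_fin.
Qed.

Lemma nbhd_near (A : set 'rV[R]_n) (r e : R) x : nbhd_closed A r x -> 0 < e ->
  exists2 a, A a & eucl_dist x a < r + e.
Proof.
rewrite /nbhd_closed /= => h e0.
have : (dist_set x A < (r + e)%:E)%E.
  apply: le_lt_trans h _; rewrite lte_fin; lra.
move=> /ereal_inf_lt [y [a Aa <-]]; rewrite lte_fin => h2.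
by exists a.
Qed.

Lemma length_le_lip (s : R -> 'rV[R]_n) (L : R) : 0 <= L ->
  (forall x y, eucl_dist (s x) (s y) <= L * `|x - y|) ->
  (curve_length s <= L%:E)%E.
Proof.
move=> L0 hL; apply: ge_ereal_sup => v [N [t [t0 tN tinc ->]]].
rewrite lee_fin.
apply: (@le_trans _ _ (\sum_(k < N) L * (t k.+1 - t k))).
  apply: ler_sum => k _; apply: le_trans (hL _ _) _.
  rewrite ger0_norm // subr_ge0; exact/ltW/tinc.
rewrite -mulr_sumr.
rewrite -(big_mkord xpredT (fun k => t k.+1 - t k)) telescope_sumr // tN t0 subr0 mulr1 //.
Qed.

End Gen.
Arguments in_nbhd {R n}.
Arguments nbhd_near {R n}.
Arguments length_le_lip {R n}.

End ME5.
Import ME5.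

Module ME6.
Local Open Scope classical_set_scope.
Local Open Scope ring_scope.

Section Upper.
Variable R : realType.
Variable n : nat.

Definition Kn : nat := (2 * n.+1)%N.
Definition Tn := {ffun 'I_n -> 'I_(Kn + Kn).+1}.
Definition Cup (alpha Cg : R) : R :=
  (#|Tn|)%:R * ((Kn + Kn).+1)%:R * ((((2 * Cg)^-1) `^ (alpha^-1))^-1 + 2).

Lemma itv01 (x : R) : (x \in `[0, 1]) = (0 <= x <= 1).
Proof. by rewrite in_itv. Qed.

Lemma upper_bound (alpha beta Cg : R) (g : R -> 'rV[R]_n) (r : R) :
  1 <= Cg -> 0 < alpha -> alpha <= 1 -> bi_holder alpha beta Cg g -> 0 < r -> r < 1 ->
  (Lambda_hat (nbhd_closed (curve_image g) r) r <= (Cup alpha Cg * r `^ ((alpha - 1) / alpha))%:E)%E.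
Proof.
move=> Cg1 a0 a1 hg r0 r1.
have Cg0 : 0 < Cg by lra.
set K := Kn.
set dl := r / n.+1%:R.
have n1 : (0 : R) < n.+1%:R by rewrite ltr0n.
have dl0 : 0 < dl by rewrite divr_gt0.
have Kdl : K%:R * dl = 2 * r by rewrite /K /Kn /dl natrM; field; lra.
pose off (z : Tn) : 'rV[R]_n := \row_i (dl * ((z i)%:R - K%:R)).
set A := r `^ alpha^-1.
set B := ((2 * Cg)^-1) `^ (alpha^-1).
set X := (r / (2 * Cg)) `^ alpha^-1.
have A0 : 0 < A by rewrite powR_gt0.
have B0 : 0 < B by rewrite powR_gt0 // invr_gt0; lra.
have XAB : X = A * B by rewrite /X /A /B powRM // ?invr_ge0; lra.
have X0 : 0 < X by rewrite XAB mulr_gt0.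
have A1 : A <= 1.
  apply: (@le_trans _ _ (1 `^ alpha^-1)); last by rewrite powR1.
  apply: ge0_ler_powR; rewrite ?nnegrE; try lra.
  by rewrite invr_ge0; lra.
have Xa : X `^ alpha = r / (2 * Cg).
  rewrite /X -powRrM mulVf ?powRr1 //; first by rewrite divr_ge0; lra.
  by apply: lt0r_neq0.
set M := (Num.truncn (X^-1)).+1.
have Xi0 : 0 <= X^-1 by rewrite invr_ge0 ltW.
have [Mlo Mhi] := andP (Num.Theory.truncn_itv Xi0).
rewrite -/M in Mhi.
have M0 : (0 < M)%N by [].
have Mp : (0 : R) < M%:R by rewrite ltr0n.
have MX : M%:R^-1 <= X.
  rewrite -[X in _ <= X]invrK lef_pV2 ?posrE ?invr_gt0 //; exact: ltW.
have hstep : forall x y, 0 <= x <= 1 -> 0 <= y <= 1 -> `|x - y| <= M%:R^-1 ->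
    eucl_dist (g x) (g y) <= r / 2.
  move=> x y hx hy hxy.
  have hx' : x \in `[0, 1] by rewrite itv01.
  have hy' : y \in `[0, 1] by rewrite itv01.
  have [_ h] := hg x y hx' hy'.
  apply: le_trans h _.
  have : `|x - y| `^ alpha <= X `^ alpha.
    apply: ge0_ler_powR; first exact: ltW.
    - by rewrite nnegrE.
    - by rewrite nnegrE ltW.
    - exact: le_trans hxy MX.
  rewrite Xa => h2.
  have : Cg * `|x - y| `^ alpha <= Cg * (r / (2 * Cg)) by rewrite ler_wpM2l //; lra.
  have -> : Cg * (r / (2 * Cg)) = r / 2 by field; lra.
  done.
pose c (j : nat) := g (j%:R / M%:R).
pose e := enum Tn.
pose p := #|Tn|.
pose z0 : Tn := [ffun _ => ord0].
have p0 : (0 < p)%N by apply/card_gt0P; exists z0.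
pose P (k : nat) := c (k %/ p)%N + off (nth z0 e (k %% p)%N).
pose m := (M * p + p.-1)%N.
pose D := r / 2 + 2 * (r * K%:R).
have offb : forall z, eucl_norm (off z) <= r * K%:R.
  move=> z.
  have hc : forall i, `|(off z) ord0 i| <= dl * K%:R.
    move=> i; rewrite mxE normrM (gtr0_norm dl0) ler_wpM2l //; first exact: ltW.
    have zi : ((z i : nat) <= K + K)%N by rewrite -ltnS ltn_ord.
    have zi' : ((z i)%:R <= K%:R + K%:R :> R) by rewrite -natrD ler_nat.
    have K0 : (0 : R) <= K%:R by exact: ler0n.
    rewrite ler_norml; apply/andP; split; first by have := ler0n R (z i); lra.
    lra.
  apply: le_trans (eucl_coord_bound _ _ hc) _.
  have rK : r * K%:R = n.+1%:R * (dl * K%:R) by rewrite /dl; field; lra.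
  rewrite rK -[X in _ <= X]ger0_norm; last by rewrite mulr_ge0 ?mulr_ge0 ?ler0n // ltW.
  rewrite -sqrtr_sqr ler_sqrt; last exact: sqr_ge0.
  rewrite [X in _ <= X]exprMn.
  have : (n%:R : R) <= n.+1%:R ^+ 2.
    rewrite -natrX ler_nat expnS expn1; apply: leq_trans (leqnSn n) _; exact: leq_pmulr.
  have := sqr_ge0 (dl * K%:R).
  set u := (dl * K%:R) ^+ 2. move=> h1 h2.
  have : 0 <= (n.+1%:R ^+ 2 - n%:R) * u by rewrite mulr_ge0 // subr_ge0.
  lra.
have cin : forall j, (j <= M)%N -> 0 <= (j%:R / M%:R : R) <= 1.
  move=> j jM; apply/andP; split; first by rewrite divr_ge0 ?ler0n.
  by rewrite ler_pdivrMr // mul1r ler_nat.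
have hD : forall k, (k < m)%N -> eucl_dist (P k.+1) (P k) <= D.
  move=> k km.
  have hab1 : (k %/ p <= k.+1 %/ p)%N by apply: leq_div2r; exact: leqnSn.
  have hb1 : (k.+1 %/ p * p <= k.+1)%N by exact: leq_trunc_div.
  have ha1 : (k < (k %/ p).+1 * p)%N by exact: ltn_ceil.
  have hab2 : (k.+1 %/ p <= (k %/ p).+1)%N.
    by rewrite -(leq_pmul2r p0); apply: leq_trans hb1 _.
  have hbM : (k.+1 %/ p <= M)%N.
    rewrite -ltnS -(ltn_pmul2r p0); apply: leq_ltn_trans hb1 _.
    apply: leq_ltn_trans km _; rewrite /m mulSnr ltn_add2l ltn_predL //.
  have hcase : forall a b : nat, (a <= b)%N -> (b <= a.+1)%N -> b = a \/ b = a.+1.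
    move=> a b h1; rewrite leq_eqVlt => /orP[/eqP ->|]; first by right.
    by rewrite ltnS => h; left; apply/eqP; rewrite eqn_leq h h1.
  have hcc : eucl_dist (c (k.+1 %/ p)%N) (c (k %/ p)%N) <= r / 2.
    case: (hcase _ _ hab1 hab2) => hb; rewrite hb; first by rewrite eucl_dist0; lra.
    rewrite hb in hbM.
    apply: hstep; [exact: cin | apply: cin; exact: ltnW |].
    rewrite -mulrBl -natrB // subSnn normrM normr1 mul1r ger0_norm // invr_ge0; exact: ltW.
  have t1 := eucl_dist_tri (P k.+1) (c (k.+1 %/ p)%N) (P k).
  have t2 := eucl_dist_tri (c (k.+1 %/ p)%N) (c (k %/ p)%N) (P k).
  have e1 : eucl_dist (P k.+1) (c (k.+1 %/ p)%N) = eucl_norm (off (nth z0 e (k.+1 %% p)%N)).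
    by rewrite /eucl_dist /P addrC addKr.
  have e2 : eucl_dist (c (k %/ p)%N) (P k) = eucl_norm (off (nth z0 e (k %% p)%N)).
    by rewrite /eucl_dist /P opprD addrA subrr add0r eucl_normN.
  have o1 := offb (nth z0 e (k.+1 %% p)%N).
  have o2 := offb (nth z0 e (k %% p)%N).
  rewrite /D. lra.
have m0 : (0 < m)%N by rewrite /m addn_gt0 muln_gt0 M0 p0.
pose s := plc P m.
have D0 : 0 <= D by rewrite /D; have := ler0n R K; nra.
have lip : forall x y, eucl_dist (s x) (s y) <= m%:R * D * `|x - y|.
  exact: plc_lip D0 hD.
have cover : nbhd_closed (curve_image g) r `<=` nbhd_closed (s @` `[0, 1]) r.
  move=> x hx.
  have r2 : 0 < r / 2 by lra.
  have [a [t ht <-] hxa] := nbhd_near _ _ _ _ hx r2.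
  have ht' : 0 <= t <= 1 by move: ht; rewrite /= in_itv.
  have [j [jM hj]] := grid1 _ _ M0 ht'.
  have hgj : eucl_dist (g t) (c j) <= r / 2 by apply: hstep => //; exact: cin.
  pose w := x - c j.
  have hwn : eucl_norm w < 2 * r.
    have := eucl_dist_tri x (g t) (c j). rewrite /w -/(eucl_dist x (c j)). lra.
  have hw : forall i, `|w ord0 i| <= K%:R * dl.
    move=> i; rewrite Kdl; apply: le_trans (coord_le_norm w i) _; exact: ltW.
  pose tr (i : 'I_n) := Num.truncn (w ord0 i / dl + K%:R + 2^-1).
  have hr := fun i => round1 _ _ _ dl0 (hw i).
  pose z : Tn := [ffun i => inord (tr i)].
  have hz : forall i, (z i : nat) = tr i.
    by move=> i; rewrite ffunE inordK //; case: (hr i).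
  pose idx := index z e.
  have ze : z \in e by rewrite mem_enum.
  have hidx : (idx < p)%N by rewrite /p cardE index_mem.
  have hnth : nth z0 e idx = z by exact: nth_index.
  pose k := (j * p + idx)%N.
  have km : (k <= m)%N.
    rewrite /k /m; apply: leq_add; first by rewrite leq_mul2r jM orbT.
    by rewrite -ltnS prednK.
  have kdiv : (k %/ p)%N = j by rewrite /k divnMDl // divn_small // addn0.
  have kmod : (k %% p)%N = idx by rewrite /k modnMDl modn_small.
  have sk : s (k%:R / m%:R) = c j + off z.
    by rewrite /s plc_at // /P kdiv kmod hnth.
  apply: (in_nbhd _ _ _ (s (k%:R / m%:R))).
    exists (k%:R / m%:R) => //=; rewrite in_itv /=; apply/andP; split.
      by rewrite divr_ge0 ?ler0n.
    by rewrite ler_pdivrMr ?ltr0n // mul1r ler_nat.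
  rewrite sk.
  have -> : eucl_dist x (c j + off z) = eucl_norm (w - off z)
    by rewrite /eucl_dist /w opprD addrA.
  have hres : forall i, `|(w - off z) ord0 i| <= dl / 2.
    move=> i; have [_ h] := hr i.
    suff -> : (w - off z) ord0 i = w ord0 i - dl * ((tr i)%:R - K%:R) by exact: h.
    by rewrite !mxE hz.
  apply: le_trans (eucl_coord_bound _ _ hres) _.
  have hr' : r = n.+1%:R * dl by rewrite /dl; field; lra.
  rewrite -[X in _ <= X](ger0_norm (ltW r0)) -sqrtr_sqr ler_sqrt; last exact: sqr_ge0.
  have e1 : r ^+ 2 - n%:R * (dl / 2) ^+ 2 = dl ^+ 2 * (n.+1%:R ^+ 2 - n%:R / 4).
    by rewrite hr'; field.
  have h1 : (n.+1%:R : R) <= n.+1%:R ^+ 2 by rewrite expr2 ler_peMl ?ler1n ?ler0n.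
  have h2 : 0 <= dl ^+ 2 * (n.+1%:R ^+ 2 - n%:R / 4 :> R).
    apply: mulr_ge0; first exact: sqr_ge0.
    have := ler0n R n; rewrite -natr1 in h1 *; lra.
  rewrite -subr_ge0 e1 //.
apply: (@le_trans _ _ (m%:R * D)%:E).
  apply: ge_ereal_inf; exists (curve_length s).
    exists s => //; split; last exact: cover.
    by exists (m%:R * D) => x y _ _; exact: lip.
  apply: length_le_lip; first by rewrite mulr_ge0 ?ler0n.
  exact: lip.
rewrite lee_fin.
have ep : r `^ ((alpha - 1) / alpha) = r / A.
  have -> : (alpha - 1) / alpha = 1 + (- alpha^-1) by field; exact: lt0r_neq0.
  rewrite powRD; last by rewrite (lt0r_neq0 r0) implybT.
  by rewrite powRr1 ?powRN // ltW.
rewrite ep.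
have mle : (m%:R : R) <= (M%:R + 1) * p%:R.
  rewrite natr1 -natrM ler_nat /m mulSnr leq_add2l; exact: leq_pred.
have MleX : (M%:R : R) <= X^-1 + 1 by rewrite /M -natr1; lra.
have Xinv : X^-1 = A^-1 * B^-1 by rewrite XAB invfM.
have a1' : 1 <= A^-1 by rewrite invf_ge1.
have hDQ : D <= r * ((K + K).+1)%:R.
  rewrite /D -[((K + K).+1)%:R]natr1 natrD; lra.
set a := A^-1 in a1' Xinv *. set b := B^-1 in Xinv *.
have b0 : 0 < b by rewrite invr_gt0.
have P0 : (0 : R) <= p%:R by exact: ler0n.
have Q0 : (0 : R) <= ((K + K).+1)%:R by exact: ler0n.
have Mr0 : (0 : R) <= M%:R by exact: ler0n.
have st1 : m%:R * D <= (M%:R + 1) * p%:R * D by exact: ler_wpM2r.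
have st2 : (M%:R + 1) * p%:R * D <= (M%:R + 1) * p%:R * (r * ((K + K).+1)%:R).
  by apply: ler_wpM2l => //; rewrite mulr_ge0 // addr_ge0.
have st3 : M%:R + 1 <= a * (b + 2) by rewrite Xinv in MleX; lra.
have st4 : (M%:R + 1) * (p%:R * (r * ((K + K).+1)%:R)) <=
           a * (b + 2) * (p%:R * (r * ((K + K).+1)%:R)).
  by apply: ler_wpM2r => //; rewrite mulr_ge0 // mulr_ge0 // ltW.
have e3 : Cup alpha Cg * (r / A) = a * (b + 2) * (p%:R * (r * ((K + K).+1)%:R)).
  rewrite /Cup /a /b /B /p /K /A; ring.
rewrite e3. rewrite !mulrA in st2 st4 *. lra.
Qed.

End Upper.

End ME6.
Import ME6.

Module ME7.
Local Open Scope classical_set_scope.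
Local Open Scope ring_scope.

Section Lower.
Variable R : realType.
Variable n : nat.

Definition Clo (beta Cg : R) : R := (10 * Cg) `^ (beta^-1).

Lemma lower_bound (alpha beta Cg : R) (g : R -> 'rV[R]_n) (r : R) :
  1 <= Cg -> 0 < beta -> bi_holder alpha beta Cg g -> 0 < r -> 10 * Cg * r < 1 ->
  (((Clo beta Cg)^-1 * r `^ ((beta - 1) / beta))%:E <=
     Lambda_hat (nbhd_closed (curve_image g) r) r)%E.
Proof.
move=> Cg1 b0 hg r0 rs.
have Cg0 : 0 < Cg by lra.
apply: le_ereal_inf_tmp => _ [s [[L0 hL0] hcov] <-].
set Ab := r `^ beta^-1.
set Bb := Clo beta Cg.
set Xb := (10 * Cg * r) `^ beta^-1.
have Ab0 : 0 < Ab by rewrite powR_gt0.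
have Bb0 : 0 < Bb by rewrite powR_gt0 //; lra.
have XAB : Xb = Bb * Ab by rewrite /Xb /Bb /Ab /Clo powRM //; lra.
have Xb0 : 0 < Xb by rewrite XAB mulr_gt0.
have Xb1 : Xb <= 1.
  apply: (@le_trans _ _ (1 `^ beta^-1)); last by rewrite powR1.
  apply: ge0_ler_powR; first by rewrite invr_ge0 ltW.
  - by rewrite nnegrE; apply: mulr_ge0; lra.
  - by rewrite nnegrE.
  - exact: ltW.
have Xbb : Xb `^ beta = 10 * Cg * r.
  rewrite /Xb -powRrM mulVf ?powRr1 //; first by apply: mulr_ge0; lra.
  exact: lt0r_neq0.
have Xi0 : 0 <= Xb^-1 by rewrite invr_ge0 ltW.
have Xi1 : 1 <= Xb^-1 by rewrite invf_ge1.
have [Nlo Nhi] := andP (Num.Theory.truncn_itv Xi0).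
set N := Num.truncn (Xb^-1) in Nlo Nhi.
have N1 : (0 < N)%N by rewrite /N Num.Theory.truncn_gt0.
have Np : (0 : R) < N%:R by rewrite ltr0n.
pose y (j : 'I_N.+1) := g ((j : nat)%:R / N%:R).
have cin : forall j, (j <= N)%N -> 0 <= (j%:R / N%:R : R) <= 1.
  move=> j jN; apply/andP; split; first by rewrite divr_ge0 ?ler0n.
  by rewrite ler_pdivrMr // mul1r ler_nat.
have itv01 : forall x : R, (x \in `[0, 1]) = (0 <= x <= 1) by move=> x; rewrite in_itv.
have NX : Xb <= N%:R^-1.
  by rewrite -[X in X <= _]invrK lef_pV2 ?posrE ?invr_gt0.
have hsep : forall a b : 'I_N.+1, a != b -> 5 * (2 * r) <= eucl_dist (y a) (y b).
  move=> a b ab.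
  have ha : ((a : nat)%:R / N%:R : R) \in `[0, 1] by rewrite itv01 cin // -ltnS.
  have hb : ((b : nat)%:R / N%:R : R) \in `[0, 1] by rewrite itv01 cin // -ltnS.
  have [h _] := hg _ _ ha hb.
  apply: le_trans h.
  have d1 : N%:R^-1 <= `|(a : nat)%:R / N%:R - (b : nat)%:R / N%:R : R|.
    have Ni0 : (0 : R) <= N%:R^-1 by rewrite invr_ge0 ltW.
    rewrite -mulrBl normrM (ger0_norm Ni0).
    rewrite -[X in X <= _]mul1r ler_wpM2r //.
    have : (a : nat) != b by exact: ab.
    case: (ltngtP a b) => h hne //.
      by rewrite distrC -(natrB _ (ltnW h)) ger0_norm ?ler0n // ler1n subn_gt0.
    by rewrite -(natrB _ (ltnW h)) ger0_norm ?ler0n // ler1n subn_gt0.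
  have : Xb `^ beta <= `|(a : nat)%:R / N%:R - (b : nat)%:R / N%:R : R| `^ beta.
    apply: ge0_ler_powR; first exact: ltW.
    - by rewrite nnegrE ltW.
    - by rewrite nnegrE.
    - exact: le_trans NX d1.
  rewrite Xbb => h2.
  have : Cg^-1 * (10 * Cg * r) <= Cg^-1 * `|(a : nat)%:R / N%:R - (b : nat)%:R / N%:R : R| `^ beta.
    by rewrite ler_wpM2l // invr_ge0 ltW.
  have -> : Cg^-1 * (10 * Cg * r) = 5 * (2 * r) by field; lra.
  done.
pose L := Num.max L0 1.
have L1 : 1 <= L by rewrite /L le_max lexx orbT.
have hL : forall x1 y1, x1 \in `[0, 1] -> y1 \in `[0, 1] -> eucl_dist (s x1) (s y1) <= L * `|x1 - y1|.
  move=> x1 y1 hx hy; apply: le_trans (hL0 x1 y1 hx hy) _.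
  by rewrite ler_wpM2r // /L le_max lexx.
pose Kp := (Num.truncn (2 * L / r)).+1.
have Kp0 : (0 < Kp)%N by [].
have Kpp : (0 : R) < Kp%:R by rewrite ltr0n.
have hKp : 2 * L / r < Kp%:R.
  have h0 : 0 <= 2 * L / r by rewrite divr_ge0 //; lra.
  have [_ h] := andP (Num.Theory.truncn_itv h0); exact: h.
have LK : L / Kp%:R <= r / 2.
  rewrite ler_pdivrMr // -ler_pdivrMl; last lra.
  by apply: ltW; move: hKp; rewrite (_ : 2 * L / r = (r / 2)^-1 * L) //; field; lra.
pose q (i : nat) := s (i%:R / Kp%:R).
have hv : forall j : 'I_N.+1, exists i, (i <= Kp)%N /\ eucl_dist (q i) (y j) <= 2 * r.
  move=> j.
  have hyj : nbhd_closed (curve_image g) r (y j).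
    apply: (in_nbhd _ _ _ (y j)); last by rewrite eucl_dist0 ltW.
    by exists ((j : nat)%:R / N%:R) => //=; rewrite in_itv /= cin // -ltnS.
  have r2 : 0 < r / 2 by lra.
  have [a [tau htau <-] hya] := nbhd_near _ _ _ _ (hcov _ hyj) r2.
  have ht' : 0 <= tau <= 1 by move: htau; rewrite /= in_itv.
  have [i [iK hi]] := grid1 _ _ Kp0 ht'.
  exists i; split => //.
  have hq : eucl_dist (q i) (s tau) <= r / 2.
    rewrite eucl_dist_sym; apply: le_trans (hL _ _ _ _) _.
    - by rewrite itv01.
    - have := cin i; rewrite itv01.
      move=> _; apply/andP; split; first by rewrite divr_ge0 ?ler0n.
      by rewrite ler_pdivrMr // mul1r ler_nat.
    - apply: le_trans LK; rewrite mulrC -[X in _ <= X]mulrC ler_wpM2r //; first by lra.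
  have := eucl_dist_tri (q i) (s tau) (y j).
  rewrite (eucl_dist_sym (s tau) (y j)). lra.
have r2' : 0 < 2 * r by lra.
have vs := visit_sum _ _ q _ y (2 * r) r2' hsep Kp hv.
apply: (@le_trans _ _ (\sum_(i < Kp) eucl_dist (q i.+1) (q i))%:E); last first.
  apply: le_ereal_sup_tmp; exists (\sum_(i < Kp) eucl_dist (q i.+1) (q i))%:E => //.
  exists Kp, (fun i : nat => i%:R / Kp%:R); split => //.
  - by rewrite mul0r.
  - by rewrite divff // lt0r_neq0.
  - by move=> k _; rewrite ltr_pM2r ?invr_gt0 // ltr_nat.
rewrite lee_fin.
have ep : r `^ ((beta - 1) / beta) = r / Ab.
  have -> : (beta - 1) / beta = 1 + (- beta^-1) by field; exact: lt0r_neq0.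
  rewrite powRD; last by rewrite (lt0r_neq0 r0) implybT.
  by rewrite powRr1 ?powRN // ltW.
rewrite ep.
have Xinv : Xb^-1 = Bb^-1 * Ab^-1 by rewrite XAB invfM.
have e1 : Bb^-1 * (r / Ab) = r * Xb^-1 by rewrite Xinv; ring.
rewrite e1.
rewrite -natr1 in Nhi.
have N1' : (1 : R) <= N%:R by rewrite ler1n.
have h : r * Xb^-1 <= r * (N%:R + 1) by rewrite ler_wpM2l ?ltW.
have h2 : 0 <= r * (N%:R - 1) by apply: mulr_ge0; [exact: ltW | rewrite subr_ge0].
lra.
Qed.

End Lower.

End ME7.
Import ME7.

Local Open Scope classical_set_scope.
Local Open Scope ring_scope.

Theorem corollary3p8 (R : realType) :
  forall (beta Cg : R), 1 <= Cg ->
  exists r0 : R, 0 < r0 /\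
  forall (alpha : R) (n : nat), 0 < alpha -> alpha <= beta -> alpha <= 1 ->
  exists C : R, 0 < C /\
  forall g : R -> 'rV[R]_n, bi_holder alpha beta Cg g ->
  forall r : R, 0 < r -> r < r0 ->
    ((C^-1 * r `^ ((beta - 1) / beta))%:E
       <= Lambda_hat (nbhd_closed (curve_image g) r) r)%E /\
    (Lambda_hat (nbhd_closed (curve_image g) r) r
       <= (C * r `^ ((alpha - 1) / alpha))%:E)%E.
Proof.
move=> beta Cg Cg1.
have Cg0 : 0 < Cg by lra.
exists (10 * Cg)^-1; split; first by rewrite invr_gt0; lra.
move=> alpha n a0 ab a1.
have b0 : 0 < beta by lra.
have Cup0 : 0 < @Cup R n alpha Cg.
  rewrite /Cup; apply: mulr_gt0; first apply: mulr_gt0.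
  - rewrite ltr0n; apply/card_gt0P; by exists [ffun=> ord0].
  - by rewrite ltr0n.
  - apply: ltr_wpDl; last lra.
    by rewrite invr_ge0 powR_ge0.
have Clo0 : 0 < @Clo R beta Cg by rewrite /Clo powR_gt0 //; lra.
exists (@Cup R n alpha Cg + @Clo R beta Cg); split; first by rewrite addr_gt0.
move=> g hg r r0 rr0.
have rs : 10 * Cg * r < 1.
  by move: rr0; rewrite -(ltr_pM2l (_ : 0 < 10 * Cg)) ?mulfV //; lra.
have r1 : r < 1.
  have : (10 * Cg)^-1 <= 1 by rewrite invf_le1; lra.
  lra.
split.
  apply: le_trans (lower_bound _ _ _ _ _ g r Cg1 b0 hg r0 rs); rewrite lee_fin.
  apply: ler_wpM2r; first exact: powR_ge0.
  rewrite lef_pV2 ?posrE ?addr_gt0 //; lra.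
apply: le_trans (upper_bound _ _ _ _ _ g r Cg1 a0 a1 hg r0 r1) _; rewrite lee_fin.
apply: ler_wpM2r; first exact: powR_ge0.
lra.
Qed.
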